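(* Let $\lambda>0$ and let $\ell$ be a nondegenerate Hermitian form and $A$ an antilinear operator on a complex $k$-dimensional space, represented in some basis by matrices $H$ and $J_{\lambda,k}$ respectively, where $H$ is a Hankel matrix with $H_{i,j}=0$ for all $i+j\le k$. Then there is a basis with respect to which $\ell$ and $A$ are represented by $\pm S_k$ and $J_{\lambda,k}$ respectively.
   Context: An antilinear operator satisfies $A(zv+w)=\bar zAv+Aw$; $\ell$ is linear in the first argument, conjugate-linear in the second. In a basis $e_1,\dots,e_k$, $\ell$ is represented by $H_{i,j}=\ell(e_j,e_i)$ and $A$ by $C$ with $Ae_i=\sum_m C_{m,i}e_m$; a change of basis with transition matrix $M$ sends $(H,C)$ to $((M^{-1})^*HM^{-1},MC\overline M^{-1})$. $T_k$ has $(i,j)$ entry $1$ if $j-i=1$ and $0$ otherwise; $J_{\lambda,k}=\lambda I_k+T_k$; $S_k$ has $(i,j)$ entry $1$ if $i+j=k+1$ and $0$ otherwise. *)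

(* Defs.v *)
From HB Require Import structures.
From mathcomp Require Import all_boot all_order all_algebra.
Set Implicit Arguments. Unset Strict Implicit. Unset Printing Implicit Defensive.
Import Order.TTheory GRing.Theory Num.Theory.
Local Open Scope ring_scope.

(* Indices are 0-based here: paper index i corresponds to i.+1. *)

Definition cadj_mx (C : numClosedFieldType) (m n : nat) (A : 'M[C]_(m, n)) : 'M[C]_(n, m) :=
  map_mx Num.conj (A^T).

Definition cconj_mx (C : numClosedFieldType) (m n : nat) (A : 'M[C]_(m, n)) : 'M[C]_(m, n) :=
  map_mx Num.conj A.

Definition Tmx (C : numClosedFieldType) (k : nat) : 'M[C]_k :=
  \matrix_(i < k, j < k) (if j == i.+1 :> nat then 1 else 0).

Definition Jmx (C : numClosedFieldType) (lam : C) (k : nat) : 'M[C]_k :=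
  lam%:M + Tmx C k.

(* S_k : (i,j) entry 1 iff i + j = k + 1 (1-based), i.e. i + j + 1 = k 0-based *)
Definition Smx (C : numClosedFieldType) (k : nat) : 'M[C]_k :=
  \matrix_(i < k, j < k) (if (i + j).+1 == k then 1 else 0).

Definition hermitian_mx (C : numClosedFieldType) (k : nat) (H : 'M[C]_k) : Prop :=
  cadj_mx H = H.

Definition hankel_mx (C : numClosedFieldType) (k : nat) (H : 'M[C]_k) : Prop :=
  forall i j i' j' : 'I_k, (i + j = i' + j')%N -> H i j = H i' j'.

(* Main.v *)
Require Import Defs.
From HB Require Import structures.
From mathcomp Require Import all_boot all_order all_algebra.
From mathcomp Require Import ring lra zify.
Import Order.TTheory GRing.Theory Num.Theory.
Local Open Scope ring_scope.

Lemma sum_ind (C : numClosedFieldType) (n m : nat) (F : 'I_n.+1 -> C) :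
  \sum_(l < n.+1) (if (l == m :> nat) then F l else 0) =
  if (m < n.+1)%N then F (inord m) else 0.
Proof.
case: ltnP => hm.
  rewrite (bigD1 (Ordinal hm)) //= eqxx big1 ?addr0.
    by congr F; apply: val_inj; rewrite /= inordK.
  move=> l hl; case: eqP => // e; case/eqP: hl; exact: val_inj.
apply: big1 => l _; case: eqP => // e; move: (ltn_ord l); rewrite e; lia.
Qed.

Definition PT {C : numClosedFieldType} (n : nat) (p : {poly C}) : 'M[C]_n.+1 :=
  horner_mx (Tmx C n.+1) p.

Lemma PT_entry (C : numClosedFieldType) (n : nat) (p : {poly C}) (i j : 'I_n.+1) :
  PT n p i j = if (i <= j)%N then p`_(j - i) else 0.
Proof.
elim/poly_ind: p i j => [|p c IH] i j.
  by rewrite /PT rmorph0 mxE coef0; case: ifP.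
rewrite /PT rmorphD rmorphM /= horner_mx_X horner_mx_C -/(PT n p) mxE.
rewrite coefD coefMX coefC !mxE.
have -> : \sum_j0 PT n p i j0 * Tmx C n.+1 j0 j =
   \sum_(l < n.+1) (if (l == j.-1 :> nat) then (if (0 < j)%N then PT n p i l else 0) else 0).
  apply: eq_bigr => l _; rewrite mxE.
  case: (j : nat) => [|j'] /=; first by case: eqP; rewrite ?mulr0 //.
  by rewrite eqSS eq_sym; case: eqP; rewrite ?mulr1 ?mulr0.
rewrite sum_ind.
case: (ltnP 0 j) => hj.
  have hj1 : (j.-1 < n.+1)%N by move: (ltn_ord j); lia.
  rewrite hj1 IH inordK //.
  have -> : (i == j) = ((i : nat) == j) by [].
  case: (ltngtP i j) => hij.
  - have h1 : (i <= j.-1)%N by lia.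
    have h2 : (i <= j)%N by lia.
    have h3 : ((j - i)%N == 0%N) = false by apply/eqP; lia.
    rewrite ?h1 ?h2 ?h3 ?mulr0n ?addr0 ?add0r. congr (p`_ _); lia.
  - have h2 : (i <= j)%N = false by apply/negbTE; rewrite -ltnNge.
    have h1 : (i <= j.-1)%N = false by apply/negbTE; lia.
    have h3 : ((i:nat) == j) = false by apply/eqP; lia.
    by rewrite ?h1 ?h2 ?h3 ?mulr0n ?addr0.
  - have h1 : (j <= j.-1)%N = false by apply/negbTE; lia.
    by rewrite hij h1 subnn eqxx mulr1n add0r.
have j0 : (j : nat) = 0%N by lia.
rewrite if_same add0r.
have -> : (i == j) = ((i : nat) == j) by [].
rewrite j0 sub0n leqn0 eqxx; case: eqP => _ //; rewrite ?add0r //.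
Qed.

Lemma PT_zero (C : numClosedFieldType) (n : nat) (p : {poly C}) :
  (forall i, (i < n.+1)%N -> p`_i = 0) -> PT n p = 0.
Proof.
move=> hp; apply/matrixP => i j; rewrite PT_entry mxE.
case: ifP => // _; apply: hp; move: (ltn_ord j); lia.
Qed.

Lemma S_entry (C : numClosedFieldType) (n : nat) (i l : 'I_n.+1) :
  Smx C n.+1 i l = if ((l : nat) == (n - i)%N) then 1 else 0.
Proof.
rewrite mxE; move: (ltn_ord i) (ltn_ord l) => hi hl.
have -> : ((i + l).+1 == n.+1) = ((l : nat) == (n - i)%N) by apply/eqP/eqP; [move=> e; lia | move=> e; lia].
by [].
Qed.

Lemma S_entry2 (C : numClosedFieldType) (n : nat) (i l : 'I_n.+1) :
  Smx C n.+1 i l = if ((i : nat) == (n - l)%N) then 1 else 0.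
Proof.
rewrite S_entry; move: (ltn_ord i) (ltn_ord l) => hi hl.
have -> : ((l : nat) == (n - i)%N) = ((i : nat) == (n - l)%N) by apply/eqP/eqP; lia.
by [].
Qed.

Lemma if1l (C : numClosedFieldType) (b : bool) (x : C) :
  (if b then 1 else 0) * x = if b then x else 0.
Proof. by case: b; rewrite ?mul1r ?mul0r. Qed.

Lemma if1r (C : numClosedFieldType) (b : bool) (x : C) :
  x * (if b then 1 else 0) = if b then x else 0.
Proof. by case: b; rewrite ?mulr1 ?mulr0. Qed.

Lemma SS (C : numClosedFieldType) (n : nat) : Smx C n.+1 *m Smx C n.+1 = 1%:M.
Proof.
apply/matrixP => i j; rewrite !mxE.
under eq_bigr => l _ do rewrite S_entry (S_entry C n l j) if1l.
rewrite (@sum_ind C n _ (fun l : 'I_n.+1 => if (j : nat) == (n - l)%N then 1 else 0)); move: (ltn_ord i) (ltn_ord j) => hi hj.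
have -> : (n - i < n.+1)%N by lia.
rewrite inordK; last by lia.
have -> : (i == j) = ((i : nat) == j) by [].
have -> : ((j : nat) == (n - (n - i))%N) = ((i : nat) == j) by apply/eqP/eqP; lia.
by case: eqP.
Qed.

Lemma S_unit (C : numClosedFieldType) (n : nat) : Smx C n.+1 \in unitmx.
Proof.
by case/mulmx1_unit: (SS C n).
Qed.

Lemma PT_trS (C : numClosedFieldType) (n : nat) (q : {poly C}) :
  (PT n q)^T *m Smx C n.+1 = Smx C n.+1 *m PT n q.
Proof.
apply/matrixP => i j; rewrite !mxE.
under eq_bigr => l _ do rewrite mxE PT_entry S_entry2 if1r.
under [X in _ = X]eq_bigr => l _ do rewrite PT_entry S_entry if1l.
rewrite !sum_ind; move: (ltn_ord i) (ltn_ord j) => hi hj.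
have -> : (n - j < n.+1)%N by lia.
have -> : (n - i < n.+1)%N by lia.
rewrite !inordK; try lia.
have -> : (n - j <= i)%N = (n - i <= j)%N by apply/idP/idP; lia.
case: ifP => // h; congr (q`_ _); lia.
Qed.

Definition hpoly {C : numClosedFieldType} {n : nat} (H : 'M[C]_n.+1) : {poly C} :=
  \poly_(m < n.+1) H ord_max (inord m).

Lemma H_repr (C : numClosedFieldType) (n : nat) (H : 'M[C]_n.+1) :
  hankel_mx H -> (forall i j : 'I_n.+1, (i + j + 2 <= n.+1)%N -> H i j = 0) ->
  H = Smx C n.+1 *m PT n (hpoly H).
Proof.
move=> hH h0; apply/matrixP => i j; rewrite !mxE.
under eq_bigr => l _ do rewrite S_entry if1l PT_entry.
rewrite (@sum_ind C n _ (fun l : 'I_n.+1 => if (l <= j)%N then (hpoly H)`_(j - l) else 0)).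
move: (ltn_ord i) (ltn_ord j) => hi hj.
have -> : (n - i < n.+1)%N by lia.
rewrite inordK; last by lia.
case: ifP => h.
  rewrite coef_poly.
  have -> : (j - (n - i) < n.+1)%N by lia.
  apply: hH; rewrite /= inordK; lia.
apply: h0; move/negbT: h; lia.
Qed.

Lemma PT_real (C : numClosedFieldType) (n : nat) (q : {poly C}) :
  q \is a polyOver Num.real -> cconj_mx (PT n q) = PT n q.
Proof.
move=> /polyOverP hq; apply/matrixP => i j; rewrite !mxE PT_entry.
case: ifP => _; last by rewrite rmorph0.
exact: conj_Creal.
Qed.

Lemma cadj_PT (C : numClosedFieldType) (n : nat) (q : {poly C}) :
  q \is a polyOver Num.real -> cadj_mx (PT n q) = (PT n q)^T.
Proof.
move=> hq; rewrite -{2}(@PT_real C n q hq).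
by apply/matrixP => i j; rewrite !mxE.
Qed.

Lemma hpoly_real (C : numClosedFieldType) (n : nat) (H : 'M[C]_n.+1) :
  hermitian_mx H -> hankel_mx H -> hpoly H \is a polyOver Num.real.
Proof.
move=> hh hk; apply/polyOverP => m; rewrite coef_poly; case: ifP => _; last exact: rpred0.
apply/CrealP; set a := ord_max; set b := inord m.
have e : H a b = H b a by apply: hk; rewrite addnC.
have := congr1 (fun M : 'M[C]_n.+1 => M a b) (hh : cadj_mx H = H); rewrite /cadj_mx !mxE => hab.
by rewrite {1}e.
Qed.

Lemma pr_M (C : numClosedFieldType) (p q : {poly C}) : p \is a polyOver Num.real -> q \is a polyOver Num.real -> p * q \is a polyOver Num.real.
Proof.
move=> /polyOverP hp /polyOverP hq; apply/polyOverP => i.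
rewrite coefM; apply: rpred_sum => j _; exact: rpredM.
Qed.
Lemma pr_D (C : numClosedFieldType) (p q : {poly C}) : p \is a polyOver Num.real -> q \is a polyOver Num.real -> p + q \is a polyOver Num.real.
Proof.
move=> /polyOverP hp /polyOverP hq; apply/polyOverP => i.
rewrite coefD; exact: rpredD.
Qed.
Lemma pr_B (C : numClosedFieldType) (p q : {poly C}) : p \is a polyOver Num.real -> q \is a polyOver Num.real -> p - q \is a polyOver Num.real.
Proof.
move=> /polyOverP hp /polyOverP hq; apply/polyOverP => i.
rewrite coefB; exact: rpredB.
Qed.
Lemma pr_Xn (C : numClosedFieldType) n : 'X^n \is a polyOver (@Num.real C).
Proof. apply/polyOverP => i; rewrite coefXn; case: eqP => _; [exact: rpred1 | exact: rpred0]. Qed.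

Lemma sqrt_exists (C : numClosedFieldType) (h : {poly C}) (s q0 : C) :
  h \is a polyOver Num.real -> q0 \is Num.real -> q0 ^+ 2 * h`_0 = s ->
  q0 != 0 -> h`_0 != 0 ->
  forall m, exists q : {poly C},
    [/\ q \is a polyOver Num.real, q`_0 = q0 &
        forall i, (i <= m)%N -> (q * q * h - s%:P)`_i = 0].
Proof.
move=> hr q0r hs q0n h0n.
have hc : forall i, h`_i \is Num.real by move: hr => /polyOverP.
have sr : s \is Num.real by rewrite -hs; apply: rpredM; [apply: rpredX | apply: hc].
elim=> [|m [q [qr q0e hq]]].
  exists q0%:P; split; first by rewrite polyOverC.
    by rewrite coefC.
  move=> i; rewrite leqn0 => /eqP ->.
  by rewrite coefB coefC /= coef0M coef0M coefC /= -hs expr2 subrr.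
set e := q * q * h - s%:P.
set t := - e`_m.+1 / (2 * q0 * h`_0).
exists (q + t%:P * 'X^(m.+1)).
have er : e \is a polyOver Num.real.
  rewrite /e; apply: pr_B; [apply: pr_M; [apply: pr_M; exact: qr | exact: hr] | by rewrite polyOverC].
have tr : t \is Num.real.
  rewrite /t; apply: rpredM; first by rewrite rpredN; move: er => /polyOverP.
  by rewrite rpredV !rpredM // rpred_nat.
split.
- apply: pr_D => //; apply: pr_M; [by rewrite polyOverC | exact: pr_Xn].
- by rewrite coefD coefCM coefXn /= mulr0 addr0.
set r := (2 * t)%:P * (q * h) + (t ^+ 2)%:P * ('X^(m.+1) * h).
have -> : (q + t%:P * 'X^(m.+1)) * (q + t%:P * 'X^(m.+1)) * h - s%:P = e + 'X^(m.+1) * r.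
  rewrite /e /r. ring.
move=> i hi; rewrite coefD coefXnM.
case: ltnP => hlt; first by rewrite addr0 hq //; lia.
have -> : i = m.+1 by lia.
have hr0 : r`_0 = 2 * t * (q0 * h`_0).
  by rewrite /r coefD !coef0M !coefC /= coefXn /= mul0r mulr0 addr0 q0e.
rewrite subnn hr0.
rewrite /t; field.
by rewrite h0n q0n.
Qed.

Lemma PT_X (C : numClosedFieldType) (n : nat) : PT n 'X = Tmx C n.+1.
Proof. by rewrite /PT horner_mx_X. Qed.

Lemma T_not_unit (C : numClosedFieldType) (n : nat) : Tmx C n.+1 \in unitmx = false.
Proof.
apply/negbTE/negP => hT.
have : (Tmx C n.+1) ^+ n.+1 \is a GRing.unit by apply: unitrX.
have e0 : PT n ('X^(n.+1) : {poly C}) = 0.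
  apply: PT_zero => i hi.
  by rewrite coefXn; case: eqP => // e; move: hi; rewrite e ltnn.
have e1 : Tmx C n.+1 ^+ n.+1 = PT n ('X^(n.+1) : {poly C}) by rewrite /PT rmorphXn /= horner_mx_X.
by rewrite e1 e0 unitr0.
Qed.

Theorem mainTheorem8 (C : numClosedFieldType) (k : nat) (lam : C) (H : 'M[C]_k) :
  0 < lam ->
  hermitian_mx H ->
  H \in unitmx ->
  hankel_mx H ->
  (forall i j : 'I_k, (i + j + 2 <= k)%N -> H i j = 0) ->
  exists M : 'M[C]_k, exists s : C,
    [/\ M \in unitmx, s = 1 \/ s = -1,
        cadj_mx (invmx M) *m H *m invmx M = s *: Smx C k &
        M *m Jmx lam k *m invmx (cconj_mx M) = Jmx lam k].
Proof.
case: k H => [|n] H hlam hh hu hk hz.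
  exists 1%:M, 1; split; [exact: unitmx1 | by left | by apply/matrixP => -[] | by apply/matrixP => -[]].
have hH := @H_repr C n H hk hz.
set h := hpoly H in hH.
have hreal := @hpoly_real C n H hh hk; rewrite -/h in hreal.
have h0r : h`_0 \is Num.real by move: hreal => /polyOverP.
have h0n : h`_0 != 0.
  apply/eqP => h00.
  set g := \poly_(i < size h) h`_i.+1.
  have eh : h = g * 'X.
    apply/polyP => i; rewrite coefMX.
    case: i => [|i]; first by rewrite h00.
    rewrite /g coef_poly.
    case: ltnP => hs /=; first by []. rewrite nth_default //; move: hs; rewrite /=; lia.
  move: hu; rewrite hH eh /PT rmorphM /= horner_mx_X -/(PT n g) -mulmxE !unitmx_mul T_not_unit.
  by rewrite !andbF.
set s : C := if 0 < h`_0 then 1 else -1.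
have hsp : 0 < s / h`_0.
  rewrite /s; case: (real_ltgt0P h0r) => hc.
  - by rewrite mul1r invr_gt0.
  - have -> : -1 / h`_0 = (- h`_0)^-1 by rewrite invrN mulN1r.
    by rewrite invr_gt0 oppr_gt0.
  - by move: h0n; rewrite hc eqxx.
set q0 := sqrtC (s / h`_0).
have q0r : q0 \is Num.real by apply: ger0_real; rewrite sqrtC_ge0 ltW.
have q0n : q0 != 0 by rewrite sqrtC_eq0 gt_eqF.
have q0s : q0 ^+ 2 * h`_0 = s by rewrite sqrtCK mulrVK // unitfE.
have sn : s != 0 by rewrite /s; case: ifP => _; rewrite ?oppr_eq0 oner_eq0.
have [q [qr q0e hq]] := @sqrt_exists C h s q0 hreal q0r q0s q0n h0n n.
set N := PT n q.
have hPq : PT n (q * q * h) = s%:M.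
  have : PT n (q * q * h - s%:P) = 0 by apply: PT_zero => i hi; apply: hq; lia.
  by rewrite /PT rmorphB /= horner_mx_C; move/eqP; rewrite subr_eq0 => /eqP.
have key : cadj_mx N *m H *m N = s *: Smx C n.+1.
  rewrite cadj_PT // hH mulmxA PT_trS -!mulmxA.
  have -> : PT n q *m (PT n h *m PT n q) = PT n (q * q * h).
    by rewrite /PT !mulmxE !rmorphM /= (comm_horner_mx2 _ h q) mulrA.
  by rewrite hPq mul_mx_scalar.
have Nu : N \in unitmx.
  have : cadj_mx N *m H *m N \in unitmx by rewrite key unitmxZ ?unitfE // S_unit.
  by rewrite unitmx_mul => /andP[].
exists (invmx N), s; split.
- by rewrite unitmx_inv.
- by rewrite /s; case: ifP => _; [left|right].
- by rewrite invmxK.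
have hc : cconj_mx (invmx N) = invmx N.
  by rewrite /cconj_mx (map_invmx Num.conj) -/(cconj_mx N) PT_real.
rewrite hc invmxK.
have hJ : Jmx lam n.+1 = PT n (lam%:P + 'X).
  by rewrite /PT rmorphD /= horner_mx_C horner_mx_X.
rewrite hJ -mulmxA.
have -> : PT n (lam%:P + 'X) *m N = N *m PT n (lam%:P + 'X).
  by rewrite /N /PT !mulmxE -!rmorphM /= mulrC.
by rewrite mulKmx.
Qed.
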